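(* Let $n>10^{(10^{13})}$ be an integer with factorization $n=\prod_{i=1}^r p_i^{a_i}$, where $p_i$ is the $i$-th prime, $a_i\ge 0$, and $p_r$ is the largest prime divisor of $n$. For integers $k\ge1$ put $x_k=(k\log n)^{1/k}$, and for a prime $p$ with $x_{k+1}<p\le x_k$ for some integer $k\ge 1$ define $U_n(p)=\left\lfloor \frac{\log(k\log n)}{\log p}\right\rfloor$. Let $G(m)=\frac{\sigma(m)}{m\log\log m}$. Suppose that for some index $s$, $U_n(p_s)$ is defined and $a_s>U_n(p_s)$. Then $G(n)<G(n/p_s)$. Consequently, if $n$ is the least counterexample to Robin's inequality (the least integer $n>5040$ with $\sigma(n)\ge e^\gamma n\log\log n$), then $a_i\le U_n(p_i)$ for all $1\le i\le r$.
   Context: $\sigma(m)=\sum_{d\mid m} d$, $\gamma$ is the Euler–Mascheroni constant, $\log$ is the natural logarithm. *)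

(* Defs.v *)
From Stdlib Require Import Reals.
From Coquelicot Require Import Coquelicot.
From mathcomp Require Import all_boot.
Set Implicit Arguments. Unset Strict Implicit.
Open Scope R_scope.

Definition sigma (m : nat) : nat := (\sum_(d <- divisors m) d)%N.

Definition G (m : nat) : R := INR (sigma m) / (INR m * ln (ln (INR m))).

Definition xk (n k : nat) : R := Rpower (INR k * ln (INR n)) (/ INR k).

(* U_n(p) = floor( log(k log n) / log p ), for the k with x_{k+1} < p <= x_k *)
Definition Uval (n k p : nat) : Z :=
  Int_part (ln (INR k * ln (INR n)) / ln (INR p)).

Definition euler_gamma : R :=
  real (Lim_seq (fun N : nat =>
          sum_f_R0 (fun j => / INR (j + 1)) N - ln (INR (N + 1)))).

Definition robin_counterexample (m : nat) : Prop :=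
  (5040 < m)%N /\ INR (sigma m) >= exp euler_gamma * INR m * ln (ln (INR m)).

(* Main.v *)
Require Import Defs.
From Stdlib Require Import Reals.
From mathcomp Require Import all_boot.
Open Scope R_scope.
From Stdlib Require Import Lra Lia.
Import Defs.
Close Scope R_scope.
From Stdlib Require Import Reals Lra Lia.
From mathcomp Require Import all_boot.
Import Defs.

Lemma sum_sub (s t : seq nat) : uniq s -> uniq t -> {subset s <= t} ->
  (\sum_(x <- s) x <= \sum_(x <- t) x)%N.
Proof.
move=> us ut sst.
rewrite [X in (_ <= X)%N](bigID (fun x => x \in s)) /=.
have -> : (\sum_(i <- t | i \in s) i = \sum_(i <- s) i)%N.
  rewrite -big_filter; apply: perm_big; apply: uniq_perm => //.
    exact: filter_uniq.
  move=> x; rewrite mem_filter; case xs: (x \in s) => //=; exact: sst.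
exact: leq_addr.
Qed.

Lemma key n p : (0 < n)%N -> prime p -> (0 < logn p n)%N ->
  (sigma n * p ^ (logn p n).-1 <= sigma (n %/ p) * (p ^ logn p n + 1))%N.
Proof.
move=> n0 pp.
set a := logn p n.
have hpa : (p ^ a %| n)%N by exact: pfactor_dvdnn.
case Ea: a => [|b] // _.
have p0 : (0 < p)%N by exact: prime_gt0.
have pn : (p %| n)%N by apply: dvdn_trans hpa; rewrite Ea expnS dvdn_mulr.
set N := n %/ p.
have nN : n = (N * p)%N by rewrite /N divnK.
rewrite /= /sigma (bigID (fun d => p %| d)%N) /=.
have S1 : (\sum_(i <- divisors n | p %| i) i <= p * sigma N)%N.
  have -> : (\sum_(i <- divisors n | p %| i) i =
      p * \sum_(e <- map (divn^~ p) [seq d <- divisors n | p %| d]) e)%N.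
    rewrite big_map big_filter big_distrr /=; apply: eq_bigr => d pd.
    by rewrite mulnC divnK.
  rewrite leq_mul2l; apply/orP; right; apply: sum_sub.
  - rewrite map_inj_in_uniq; first by rewrite filter_uniq // divisors_uniq.
    move=> x y; rewrite !mem_filter => /andP[px _] /andP[py _] e.
    by rewrite -(divnK px) -(divnK py) e.
  - exact: divisors_uniq.
  - move=> x /mapP[d]; rewrite mem_filter => /andP[pd dd] ->.
    have N0 : (0 < N)%N by move: n0; rewrite nN muln_gt0 => /andP[].
    rewrite -dvdn_divisors //.
    rewrite -(dvdn_pmul2r p0) divnK // -nN dvdn_divisors //.
have S2 : ((\sum_(i <- divisors n | ~~ (p %| i)) i) * p ^ b <= sigma N)%N.
  have -> : ((\sum_(i <- divisors n | ~~ (p %| i)) i) * p ^ b =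
      \sum_(e <- map (muln^~ (p ^ b)) [seq d <- divisors n | ~~ (p %| d)]) e)%N.
    by rewrite big_map big_filter big_distrl.
  apply: sum_sub.
  - rewrite map_inj_in_uniq; first by rewrite filter_uniq // divisors_uniq.
    move=> x y _ _ /eqP; rewrite eqn_pmul2r ?expn_gt0 ?p0 //; by move/eqP.
  - exact: divisors_uniq.
  - move=> x /mapP[d]; rewrite mem_filter => /andP[pd dd] ->.
    have N0 : (0 < N)%N by move: n0; rewrite nN muln_gt0 => /andP[].
    rewrite -dvdn_divisors //.
    rewrite -(dvdn_pmul2r p0) -mulnA -expnSr -nN Gauss_dvd.
      by rewrite dvdn_divisors // -Ea hpa andbT.
    apply: coprimeXr; rewrite coprime_sym prime_coprime //.
rewrite mulnDl.
apply: leq_trans (leq_add (leq_mul S1 (leqnn (p ^ b))) S2) _.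
by rewrite mulnDr muln1 mulnAC -expnS mulnC.
Qed.
From Stdlib Require Import Reals Lra Lia.
From mathcomp Require Import all_boot.
Import Defs.

Lemma sigma_ge n : (0 < n)%N -> (n <= sigma n)%N.
Proof.
move=> n0.
have := @sum_sub [:: n] (divisors n) is_true_true (divisors_uniq n).
rewrite big_seq1; apply=> x; rewrite inE => /eqP ->; exact: divisors_id.
Qed.

Open Scope R_scope.

Lemma INR_expn p a : INR (p ^ a)%N = INR p ^ a.
Proof.
elim: a => [|a IH] //=; by rewrite expnS mulnE mult_INR IH.
Qed.

Lemma div_lt a b c d : 0 < b -> 0 < d -> a * d < c * b -> a / b < c / d.
Proof.
intros. apply (Rmult_lt_reg_r (b*d)); [nra|].
replace (a/b*(b*d)) with (a*d) by (field; lra).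
replace (c/d*(b*d)) with (c*b) by (field; lra). lra.
Qed.

Lemma ln_le_exp x y : 0 < x -> x <= exp y -> ln x <= y.
Proof.
intros x0 h. destruct (Rle_or_lt (ln x) y) as [|h2]; auto.
apply exp_increasing in h2. rewrite exp_ln in h2; lra.
Qed.

Lemma ln_ge_exp x y : exp y < x -> y < ln x.
Proof.
intros h. rewrite -(ln_exp y). apply ln_increasing; auto. apply exp_pos.
Qed.

Lemma ln_le_m1 t : 0 < t -> ln t <= t - 1.
Proof. intros. have := exp_ineq1_le (ln t). rewrite exp_ln; lra. Qed.

Lemma part1 n p k :
  INR n > 100000000 -> prime p -> (1 <= k)%N ->
  xk n k.+1 < INR p <= xk n k ->
  (Z.of_nat (logn p n) > Uval n k p)%Z ->
  G n < G (n %/ p)%N /\ INR (n %/ p)%N > 10000.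
Proof.
move=> hn pp k1 [hx1 hx2] hU.
have n0 : (0 < n)%N by apply/ltP; apply INR_lt; simpl; lra.
have p1 : (1 < p)%N by exact: prime_gt1.
have Rp2 : 2 <= INR p by apply: (le_INR 2); apply/leP.
have Rk1 : 1 <= INR k by apply: (le_INR 1); apply/leP.
set a := logn p n in hU.
set Ln := ln (INR n).
have e3 := exp_le_3.
have Ln1 : 1 < Ln by rewrite -(ln_exp 1); apply ln_increasing; [apply exp_pos | lra].
set L := ln Ln.
have L0 : 0 < L by rewrite /L -ln_1; apply ln_increasing; lra.
set lp := ln (INR p).
have lp0 : 0 < lp by rewrite /lp -ln_1; apply ln_increasing; lra.
have hk : INR k * lp <= ln (INR k * Ln).
  have := ln_le_exp (INR p) _ ltac:(lra) hx2.
  rewrite -/lp => h.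
  apply (Rmult_le_reg_l (/ INR k)). apply Rinv_0_lt_compat; lra.
  replace (/ INR k * (INR k * lp)) with lp by (field; lra). move: h; rewrite /Ln /lp; lra.
have hU2 : (Z.of_nat k <= Uval n k p)%Z.
  have [_ hb] := base_Int_part (ln (INR k * ln (INR n)) / ln (INR p)).
  have : INR k <= ln (INR k * ln (INR n)) / ln (INR p).
    apply (Rmult_le_reg_r lp); auto. rewrite -/lp -/Ln.
    replace (ln (INR k * Ln) / lp * lp) with (ln (INR k * Ln)) by (field; lra). lra.
  move=> h.
  have : (Z.of_nat k - 1 < Uval n k p)%Z.
    apply lt_IZR. rewrite minus_IZR -INR_IZR_INZ /Uval. lra.
  lia.
have ak : (k.+1 <= a)%N.
  apply/leP. have : (Z.of_nat k < Z.of_nat a)%Z by lia. lia.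
have hk1 : ln (INR k.+1 * Ln) < INR k.+1 * lp.
  have := ln_ge_exp _ _ hx1. rewrite -/lp => h.
  apply (Rmult_lt_reg_l (/ INR k.+1)). apply Rinv_0_lt_compat; rewrite S_INR; lra.
  replace (/ INR k.+1 * (INR k.+1 * lp)) with lp by (field; rewrite S_INR; lra). move: h; rewrite /Ln /lp; lra.
have Sk : INR k.+1 = INR k + 1 by rewrite S_INR.
have hpk : INR k.+1 * Ln < INR p ^ k.+1.
  apply ln_lt_inv. rewrite Sk; nra. apply pow_lt; lra.
  rewrite ln_pow -/lp; lra.
have hL : L <= ln (INR k.+1 * Ln).
  rewrite /L. apply Rlt_le, ln_increasing; [lra | rewrite Sk; nra].
have hpa : INR p ^ k.+1 <= INR p ^ a.
  apply Rle_pow; [lra| by apply/leP].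
have Q : Ln * L < INR p ^ a * lp.
  have : Ln * L < INR p ^ k.+1 * lp.
    apply Rle_lt_trans with (Ln * (INR k.+1 * lp)). apply Rmult_le_compat_l; lra.
    rewrite -Rmult_assoc (Rmult_comm Ln). apply Rmult_lt_compat_r; lra.
  nra.
have pn_a : (p ^ a %| n)%N by exact: pfactor_dvdnn.
have pn : (p %| n)%N.
  apply: dvdn_trans pn_a; case: (a) ak => // b _; rewrite expnS dvdn_mulr //.
set N := (n %/ p)%N.
have nN : INR n = INR N * INR p by rewrite -mult_INR -mulnE /N divnK.
have hpan : INR p ^ a <= INR n.
  rewrite -INR_expn; apply le_INR; apply/leP; exact: dvdn_leq.
have hp2 : INR p ^ 2 <= INR p ^ a by apply Rle_pow; [lra| apply/leP; apply: leq_trans ak; rewrite ltnS].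
have hNp : INR p <= INR N by simpl in hp2; nra.
have hN : INR N > 10000 by nra.
split; last by [].
have LN : Ln = ln (INR N) + lp by rewrite /Ln nN ln_mult /lp; lra.
set LNN := ln (INR N).
have LN1 : 1 < LNN by rewrite /LNN -(ln_exp 1); apply ln_increasing; [apply exp_pos | lra].
set L' := ln LNN.
have L'0 : 0 < L' by rewrite /L' -ln_1; apply ln_increasing; lra.
have hdiff : lp / Ln <= L - L'.
  have t0 : 0 < LNN / Ln by apply Rdiv_lt_0_compat; lra.
  have := ln_le_m1 _ t0.
  have -> : ln (LNN / Ln) = L' - L.
    rewrite /Rdiv ln_mult; [|lra| apply Rinv_0_lt_compat; lra].
    rewrite ln_Rinv; [|lra]. rewrite /L' /L; lra.
  have -> : LNN / Ln - 1 = - (lp / Ln).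
    have -> : LNN = Ln - lp by rewrite /LNN; lra. field; lra.
  lra.
have hLL : L' < L.
  have : 0 < lp / Ln by apply Rdiv_lt_0_compat; lra. lra.
have a0 : (0 < a)%N by apply: leq_trans ak.
have K := @key n p n0 pp a0.
have K' : INR (sigma n) * INR p ^ a.-1 <= INR (sigma N) * (INR p ^ a + 1).
  move/leP/le_INR: K; rewrite !mulnE addnE !mult_INR plus_INR !INR_expn //.
have N0 : (0 < N)%N by apply/ltP; apply INR_lt; simpl; lra.
have sNge : INR N <= INR (sigma N) by apply le_INR; apply/leP; apply sigma_ge.
have hpa' : INR p ^ a = INR p * INR p ^ a.-1.
  by case: (a) a0 => // b _.
set P := INR p ^ a.-1 in K' hpa'.
have P0 : 0 < P by apply pow_lt; lra.
rewrite /G -/N -/Ln -/L -/LNN -/L'.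
apply div_lt; [rewrite nN; nra | nra |].
rewrite nN.
have H1 : L' < INR p ^ a * (L - L').
  apply Rlt_le_trans with L; first lra.
  apply Rle_trans with (INR p ^ a * (lp / Ln)).
    apply (Rmult_le_reg_l Ln); [lra|].
    replace (Ln * (INR p ^ a * (lp / Ln))) with (INR p ^ a * lp) by (field; lra). nra.
  apply Rmult_le_compat_l; [apply pow_le; lra | lra].
rewrite hpa' in H1 K'.
set sn := INR (sigma n) in K' *.
set sN := INR (sigma N) in K' sNge *.
have : sn * P * (INR N * L') <= sN * (INR p * P + 1) * (INR N * L') by apply Rmult_le_compat_r; nra.
have : sN * (INR p * P + 1) * (INR N * L') < sN * (INR N * INR p * L) * P.
  have : (INR p * P + 1) * L' < INR p * P * L by nra.
  have : 0 < sN * INR N by nra.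
  nra.
nra.
Qed.

Lemma ll_pos m : INR m > 10000 -> 0 < ln (ln (INR m)).
Proof.
intros h. have e3 := exp_le_3.
have : 1 < ln (INR m) by rewrite -(ln_exp 1); apply ln_increasing; [apply exp_pos | lra].
intros; rewrite -ln_1; apply ln_increasing; lra.
Qed.

Lemma big_bound n : INR n > 10 ^ (10 ^ 13)%N -> INR n > 100000000.
Proof.
intros h.
have : 10 ^ 8 <= 10 ^ (10 ^ 13)%N.
  apply Rle_pow; [lra|]. apply/leP.
  apply: (@leq_trans 13); first by [].
  exact: ltnW (ltn_expl 13 (isT : (1 < 10)%N)).
have -> : 10 ^ 8 = 100000000 by simpl; lra.
lra.
Qed.

Theorem theorem3 :
  (forall (n p k : nat),
      INR n > 10 ^ (10 ^ 13)%N ->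
      prime p ->
      (1 <= k)%N ->
      xk n k.+1 < INR p <= xk n k ->
      (Z.of_nat (logn p n) > Uval n k p)%Z ->
      G n < G (n %/ p)%N)
  /\
  (forall n : nat,
      INR n > 10 ^ (10 ^ 13)%N ->
      robin_counterexample n ->
      (forall m : nat, robin_counterexample m -> (n <= m)%N) ->
      forall (p k : nat),
        prime p -> (p <= max_pdiv n)%N ->
        (1 <= k)%N ->
        xk n k.+1 < INR p <= xk n k ->
        (Z.of_nat (logn p n) <= Uval n k p)%Z).
Proof.
split.
  move=> n p k hn pp k1 hx hU.
  have [h _] := @part1 n p k (@big_bound n hn) pp k1 hx hU. exact h.
move=> n hn [h5040 hrob] hmin p k pp _ k1 hx.
have hn' := @big_bound n hn.
case: (Z.le_gt_cases (Z.of_nat (logn p n)) (Uval n k p)) => // hU.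
have [hG hN] := @part1 n p k hn' pp k1 hx (Z.lt_gt _ _ hU).
exfalso.
set N := (n %/ p)%N in hG hN.
set E := exp euler_gamma in hrob.
have Ln := @ll_pos n ltac:(lra).
have LN := @ll_pos N hN.
have Gn : E <= G n.
  rewrite /G. apply (Rmult_le_reg_r (INR n * ln (ln (INR n)))); [nra|].
  replace (INR (sigma n) / (INR n * ln (ln (INR n))) * (INR n * ln (ln (INR n))))
    with (INR (sigma n)) by (field; nra). lra.
have sN : INR (sigma N) >= E * INR N * ln (ln (INR N)).
  have : E < G N by lra.
  rewrite /G => h.
  have := Rmult_lt_compat_r (INR N * ln (ln (INR N))) _ _ ltac:(nra) h.
  replace (INR (sigma N) / (INR N * ln (ln (INR N))) * (INR N * ln (ln (INR N))))
    with (INR (sigma N)) by (field; nra). nra.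
have cN : robin_counterexample N.
  split => //. apply/ltP; apply INR_lt. rewrite INR_IZR_INZ. simpl Z.of_nat. lra.
have := hmin N cN.
have n0 : (0 < n)%N by apply/ltP; apply INR_lt; simpl; lra.
have : (N < n)%N by apply: ltn_Pdiv => //; exact: prime_gt1.
move=> h1 h2. by have := leq_trans h1 h2; rewrite ltnn.
Qed.
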